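(* Let $G=(V,E)$ be a finite simple graph of order $n$ and let $T=n-1$. If $(x,y,z)$ is an optimal solution of the integer program with the constraints of the Time Step Model $\mathrm{TSM}(G,T)$ and objective ''minimize $\sum_{v\in V}x^0_v-\frac{1}{2T}\sum_{t\in[T]}z^t$'', then $C=\{v\in V\colon x^0_v=1\}$ is a minimum zero forcing set of $G$ with $\mathrm{PT}(G)=\mathrm{pt}(G,C)=\sum_{t\in[T]}z^t$.
   Context: Zero forcing: under the standard color change rule a filled vertex $u$ can force a non-filled vertex $v$ if $v$ is the only non-filled neighbor of $u$; $C\subseteq V$ is a zero forcing set if, starting with $C$ filled and repeatedly forcing, all of $V$ becomes filled; a minimum zero forcing set is one of minimum size. The propagation time $\mathrm{pt}(G,C)$ is the smallest $t^*$ such that, starting from $C^{[0]}=C$ and setting $C^{[t]}=C^{[t-1]}\cup\{v\notin C^{[t-1]}\colon$ some $u\in C^{[t-1]}$ has $v$ as its only neighbor outside $C^{[t-1]}\}$, one has $C^{[t^*]}=V$ ($\infty$ if $C$ is not a zero forcing set). $\mathrm{PT}(G)=\max\{\mathrm{pt}(G,C)\colon C$ a minimum zero forcing set$\}$. $N(u)$ is the neighborhood of $u$ and $d(u)=|N(u)|$. Time Step Model constraints: $A$ is the set of arcs containing $(u,v)$ and $(v,u)$ for each edge $\{u,v\}$, $[T]=\{1,\dots,T\}$. Binary variables $x^t_v$ ($v\in V$, $t\in\{0,\dots,T\}$), $y^t_a$ ($a\in A$, $t\in[T]$), $z^t$ ($t\in[T]$), with constraints: (1) $x^0_v+\sum_{t\in[T]}\sum_{a=(u,v)\in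 A}y^t_a=1$ for all $v$; (2) $y^t_a\leq x^{t-1}_u$ for all $a=(u,v)\in A$, $t\in[T]$; (3) $y^t_a\leq x^{t-1}_w$ for all $a=(u,v)\in A$, $w\in N(u)\setminus\{v\}$, $t\in[T]$; (4) $x^t_v=x^{t-1}_v+\sum_{a=(u,v)\in A}y^t_a$ for all $v$, $t\in[T]$; (5) $x^{t-1}_u-x^{t-1}_v+\sum_{w\in N(u)\setminus\{v\}}x^{t-1}_w\leq\sum_{a=(w,v)\in A}y^t_a+d(u)-1$ for all $(u,v)\in A$, $t\in[T]$; (6) $\frac1n\sum_{v\in V}(x^t_v-x^{t-1}_v)-z^t\leq0$ for all $t\in[T]$; (7) $z^t-\sum_{v\in V}(x^t_v-x^{t-1}_v)\leq 0$ for all $t\in[T]$. *)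

(* Defs.v *)
From mathcomp Require Import all_boot all_order all_algebra.
Set Implicit Arguments. Unset Strict Implicit. Unset Printing Implicit Defensive.
Import Order.TTheory GRing.Theory Num.Theory.

Definition simple_graph (V : finType) (adj : rel V) : Prop :=
  symmetric adj /\ irreflexive adj.

Section ZF.
Variables (V : finType) (adj : rel V).

Definition nbhd (u : V) : {set V} := [set w | adj u w].

Fixpoint valid_forcing (S : {set V}) (s : seq (V * V)) : bool :=
  match s with
  | [::] => S == setT
  | (u, v) :: s' =>
      [&& u \in S, v \notin S, nbhd u :\: S == [set v]
        & valid_forcing (v |: S) s']
  end.

Definition zero_forcing_set (C : {set V}) : Prop :=
  exists s : seq (V * V), valid_forcing C s.

Definition min_zero_forcing_set (C : {set V}) : Prop :=
  zero_forcing_set C /\ forall C', zero_forcing_set C' -> #|C| <= #|C'|.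

Definition prop_step (S : {set V}) : {set V} :=
  S :|: [set v | (v \notin S) && [exists u in S, nbhd u :\: S == [set v]]].

(* pt(G,C) = t  (finite value; pt = oo means no such t exists) *)
Definition pt_is (C : {set V}) (t : nat) : Prop :=
  iter t prop_step C = setT /\
  forall t', iter t' prop_step C = setT -> t <= t'.

Definition PT_is (t : nat) : Prop :=
  (exists C, min_zero_forcing_set C /\ pt_is C t) /\
  (forall C, min_zero_forcing_set C -> forall t', pt_is C t' -> t' <= t).

End ZF.

Local Open Scope ring_scope.

Definition b2q (b : bool) : rat := (nat_of_bool b)%:R.

Section TSM.
Variables (V : finType) (adj : rel V).

(* Variables: x t v  (t = 0..T),  y t u v for the arc (u,v) (used only when
   adj u v, t = 1..T),  z t  (t = 1..T).  Binary variables are booleans. *)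
Definition TSM_feasible (T : nat) (x : nat -> V -> bool)
    (y : nat -> V -> V -> bool) (z : nat -> bool) : Prop :=
  (* (1) *)
  (forall v, b2q (x 0%N v)
      + \sum_(1 <= t < T.+1) \sum_(u | adj u v) b2q (y t u v) = 1) /\
  (* (2) *)
  (forall t, (1 <= t <= T)%N -> forall u v, adj u v ->
      b2q (y t u v) <= b2q (x t.-1 u)) /\
  (* (3) *)
  (forall t, (1 <= t <= T)%N -> forall u v, adj u v ->
      forall w, w \in nbhd adj u :\ v -> b2q (y t u v) <= b2q (x t.-1 w)) /\
  (* (4) *)
  (forall t, (1 <= t <= T)%N -> forall v,
      b2q (x t v) = b2q (x t.-1 v) + \sum_(u | adj u v) b2q (y t u v)) /\
  (* (5) *)
  (forall t, (1 <= t <= T)%N -> forall u v, adj u v ->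
      b2q (x t.-1 u) - b2q (x t.-1 v)
        + \sum_(w in nbhd adj u :\ v) b2q (x t.-1 w)
      <= \sum_(w | adj w v) b2q (y t w v) + (#|nbhd adj u|)%:R - 1) /\
  (* (6) *)
  (forall t, (1 <= t <= T)%N ->
      (#|V|%:R)^-1 * \sum_(v : V) (b2q (x t v) - b2q (x t.-1 v)) - b2q (z t)
      <= 0) /\
  (* (7) *)
  (forall t, (1 <= t <= T)%N ->
      b2q (z t) - \sum_(v : V) (b2q (x t v) - b2q (x t.-1 v)) <= 0).

Definition TSM_objective (T : nat) (x : nat -> V -> bool) (z : nat -> bool)
    : rat :=
  \sum_(v : V) b2q (x 0%N v) - (2 * T%:R)^-1 * \sum_(1 <= t < T.+1) b2q (z t).

Definition TSM_optimal (T : nat) x y z : Prop :=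
  TSM_feasible T x y z /\
  forall x' y' z', TSM_feasible T x' y' z' ->
    TSM_objective T x z <= TSM_objective T x' z'.

End TSM.

(* Main.v *)
Require Import Defs.
From mathcomp Require Import all_boot all_order all_algebra.
From mathcomp Require Import ring lra zify.
Set Implicit Arguments. Unset Strict Implicit. Unset Printing Implicit Defensive.
Import Order.TTheory GRing.Theory Num.Theory.

Section ZFL.
Variables (V : finType) (adj : rel V).
Local Notation ps := (prop_step adj).

Lemma ps_sub (S : {set V}) : S \subset ps S.
Proof. by apply/subsetP => v vS; rewrite /prop_step inE vS. Qed.

Lemma ps_force (S : {set V}) u v : u \in S -> v \notin S -> nbhd adj u :\: S = [set v] ->
  v \in ps S.
Proof.
move=> uS vS hu; rewrite /prop_step !inE (negbTE vS) /=.
by apply/existsP; exists u; rewrite uS hu eqxx.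
Qed.

Lemma ps_mono (S S' : {set V}) : S \subset S' -> ps S \subset ps S'.
Proof.
move=> sub; apply/subsetP => v; rewrite /prop_step !inE.
case/orP => [vS|/andP[vS /existsP[u /andP[uS /eqP hu]]]].
  by rewrite (subsetP sub _ vS).
case vS': (v \in S') => //=.
apply/existsP; exists u; rewrite (subsetP sub _ uS) /=.
apply/eqP/setP => w; rewrite !inE.
move/setP/(_ w): (hu); rewrite !inE /=.
case: (eqVneq w v) => [->|wv].
  by move=> /andP[_ ->]; rewrite andbT; apply/negbT.
case: (adj u w); rewrite ?andbF ?andbT //.
by move/negbFE => wS; rewrite (subsetP sub _ wS).
Qed.

Lemma iter_monoS k (S S' : {set V}) : S \subset S' -> iter k ps S \subset iter k ps S'.
Proof. by elim: k => //= k IH sub; apply: ps_mono; apply: IH. Qed.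

Lemma iter_monon i j (S : {set V}) : (i <= j)%N -> iter i ps S \subset iter j ps S.
Proof.
move=> /subnK <-; elim: (j - i)%N => [|k IH] //=.
apply: subset_trans IH (ps_sub _).
Qed.

Lemma vf_iter (S : {set V}) s : valid_forcing adj S s -> iter (size s) ps S = setT.
Proof.
elim: s S => [|[u v] s IH] S /=; first by move/eqP.
case/and4P => uS vS /eqP hu /IH h.
apply/eqP; rewrite eqEsubset subsetT /= -h -iterS iterSr.
apply: iter_monoS; apply/subsetP => w; rewrite in_setU1.
case/orP => [/eqP ->|wS]; first exact: (ps_force uS vS hu).
exact: (subsetP (ps_sub S)).
Qed.

Lemma step_zf (S : {set V}) : (exists s, valid_forcing adj (ps S) s) ->
  forall S' : {set V}, S \subset S' -> S' \subset ps S -> exists s, valid_forcing adj S' s.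
Proof.
move=> [s0 h0] S'; move: {2}#|ps S :\: S'| (leqnn #|ps S :\: S'|) => m.
elim: m S' => [|m IH] S' hm sS sS'.
  have e : S' = ps S.
    apply/eqP; rewrite eqEsubset sS' /= -setD_eq0 -cards_eq0.
    by rewrite -leqn0.
  by exists s0; rewrite e.
case: (boolP (ps S \subset S')) => [h|].
  by exists s0; have -> : S' = ps S by apply/eqP; rewrite eqEsubset sS' h.
case/subsetPn => v vP vS'.
have vS : v \notin S by apply: contra vS'; apply: (subsetP sS).
move: (vP); rewrite /prop_step in_setU (negbTE vS) /= inE vS /=.
case/existsP => u /andP[uS /eqP hu].
have uS' : u \in S' by apply: (subsetP sS).
have hu' : nbhd adj u :\: S' = [set v].
  apply/setP => w; rewrite !inE.
  move/setP/(_ w): (hu); rewrite !inE.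
  case: (eqVneq w v) => [->|wv] /=.
    by move=> /andP[_ ->]; rewrite andbT.
  case: (adj u w); rewrite ?andbF ?andbT //.
  by move/negbFE => wS; rewrite (subsetP sS _ wS).
have [s1 h1] : exists s, valid_forcing adj (v |: S') s.
  apply: IH.
  - have pr : (ps S :\: (v |: S')) \proper (ps S :\: S').
      apply/properP; split.
        apply/subsetP => w; rewrite !inE; case/andP => /norP[_ ->] ->.
        by [].
      by exists v; [rewrite in_setD vS' vP | rewrite in_setD in_setU1 eqxx].
    by move: (proper_card pr) hm => a b; rewrite -ltnS; apply: leq_trans a b.
  - by apply: subset_trans sS (subsetUr _ _).
  - by apply/subsetP => w; rewrite in_setU1; case/orP => [/eqP ->|/(subsetP sS')].
by exists ((u, v) :: s1); rewrite /= uS' vS' hu' eqxx h1.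
Qed.

Lemma iter_zf k (S : {set V}) : iter k ps S = setT -> zero_forcing_set adj S.
Proof.
elim: k S => [|k IH] S /=.
  by move=> e; exists [::]; rewrite /= e eqxx.
rewrite -iterS iterSr => /IH h.
exact: (step_zf h (subxx S) (ps_sub S)).
Qed.

Lemma stab k j (S : {set V}) : iter k ps S = iter k.+1 ps S -> (k <= j)%N ->
  iter j ps S = iter k ps S.
Proof.
move=> e /subnK <-; elim: (j - k)%N => [|d IH] //=.
by rewrite IH -iterS -e.
Qed.

Lemma setT_card (A : {set V}) : (#|V| <= #|A|)%N -> A = setT.
Proof. by move=> h; apply/eqP; rewrite eqEcard subsetT cardsT. Qed.

Lemma iter_setT k (S : {set V}) : S = setT -> iter k ps S = setT.
Proof.
move=> e; apply/eqP; rewrite eqEsubset subsetT /=.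
by rewrite -{1}e; apply: (@iter_monon 0 k S).
Qed.

Lemma ptT (S : {set V}) : zero_forcing_set adj S -> iter #|V|.-1 ps S = setT.
Proof.
case=> s hs; have hK := vf_iter hs; set K := size s in hK.
case: (boolP (S == setT)) => [/eqP e|nT]; first exact: iter_setT.
have S0 : (0 < #|S|)%N.
  move: hs nT; case: (s) => [|[u v] s'] /=; first by move=> ->.
  by case/and4P => uS _ _ _ _; apply/card_gt0P; exists u.
have cl : forall k, iter k ps S = setT \/ (#|S| + k <= #|iter k ps S|)%N.
  elim=> [|k [IH|IH]]; first by right; rewrite addn0.
    by left; rewrite /= IH; apply: (@iter_setT 1).
  case: (boolP (iter k.+1 ps S == setT)) => [/eqP|nT']; first by left.
  right; rewrite addnS; apply: leq_ltn_trans IH _; apply: proper_card.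
  rewrite properEneq (ps_sub _) andbT; apply/negP => /eqP e.
  have : iter k ps S = setT.
    case: (leqP k K) => hk.
      by rewrite -(stab e hk).
    apply/eqP; rewrite eqEsubset subsetT /= -hK; apply: iter_monon.
    exact: ltnW.
  by move=> e'; move: nT'; rewrite -e e' eqxx.
case: (cl #|V|.-1) => // h; apply: setT_card; apply: leq_trans h.
by case: #|V| => [|n] //=; rewrite -add1n leq_add2r.
Qed.

Definition cnt N (S : {set V}) :=
  (\sum_(1 <= t < N.+1) (iter t ps S != iter t.-1 ps S))%N.

Lemma pt_cnt N (S : {set V}) : iter N ps S = setT ->
  pt_is adj S (cnt N S) /\ (cnt N S <= N)%N.
Proof.
move=> hN.
have ex : exists k, iter k ps S == setT by exists N; rewrite hN.
case: (ex_minnP ex) => m /eqP hm hmin.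
have mN : (m <= N)%N by apply: hmin; rewrite hN.
have tT : forall j, (m <= j)%N -> iter j ps S = setT.
  move=> j hj; apply/eqP; rewrite eqEsubset subsetT /= -{1}hm.
  exact: iter_monon.
have -> : cnt N S = m.
  rewrite /cnt (@big_cat_nat _ _ _ m.+1) //=.
  have e2 : (\sum_(m.+1 <= t < N.+1) (iter t ps S != iter t.-1 ps S))%N = 0%N.
    rewrite big_nat big1 // => t /andP[ht _]; rewrite !tT ?eqxx //.
    by case: t ht => //= t; rewrite ltnS.
    by apply: leq_trans ht; apply: leqnSn.
  rewrite e2 addn0 big_nat (eq_bigr (fun _ => 1%N)).
    by rewrite -big_nat sum_nat_const_nat muln1 subn1.
  move=> t /andP[t1 tm]; case: t t1 tm => // t _ tm /=.
  rewrite ltnS in tm.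
  suff -> : (iter t.+1 ps S != iter t ps S) by [].
  apply/eqP => e; have := stab (esym e) (ltnW tm); rewrite hm => e'.
  have : (m <= t)%N by apply: hmin; rewrite -e' eqxx.
  by rewrite leqNgt tm.
by split => //; split => // t' ht'; apply: hmin; rewrite ht'.
Qed.

Lemma pt_uniq (S : {set V}) a b : pt_is adj S a -> pt_is adj S b -> a = b.
Proof.
case=> ha ma [hb mb]; apply/eqP; rewrite eqn_leq.
by rewrite (ma _ hb) (mb _ ha).
Qed.
End ZFL.
Local Open Scope ring_scope.

Lemma b2qE b : b2q b = if b then 1 else 0.
Proof. by case: b. Qed.

Lemma b2q_ge0 b : 0 <= b2q b.
Proof. by case: b; rewrite b2qE ?ler01. Qed.

Lemma b2q_le a b : (b2q a <= b2q b) = (a ==> b).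
Proof. by case: a; case: b; rewrite !b2qE ?lexx ?ler01 ?ler10. Qed.

Lemma sum_b2q (I : Type) (r : seq I) (P : pred I) (F : I -> bool) :
  \sum_(i <- r | P i) b2q (F i) = ((\sum_(i <- r | P i) (F i : nat))%N)%:R.
Proof. by rewrite natr_sum. Qed.

Lemma telescope (f g : nat -> nat) k :
  (forall t, (1 <= t <= k)%N -> f t = (f t.-1 + g t)%N) ->
  f k = (f 0%N + \sum_(1 <= t < k.+1) g t)%N.
Proof.
elim: k => [|k IH] h; first by rewrite big_geq ?addn0.
rewrite big_nat_recr //= addnA -IH; first by apply: h; rewrite /= leqnn.
by move=> t /andP[t1 tk]; apply: h; rewrite t1 /=; apply: leq_trans tk _.
Qed.

Lemma zfrom (n k : nat) (b : bool) : (k <= n)%N ->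
  (n%:R)^-1 * k%:R - b2q b <= 0 -> b2q b - k%:R <= (0 : rat) -> b = (k != 0%N).
Proof.
case: b; case: k => [|k] //= kn h _; move: h; rewrite b2qE subr0 => h.
have : 0 < (n%:R : rat)^-1 * k.+1%:R.
  by rewrite mulr_gt0 // ?invr_gt0 ltr0n //; apply: leq_trans kn.
by rewrite ltNge h.
Qed.

Lemma zto (n k : nat) : (k <= n)%N ->
  (n%:R)^-1 * k%:R - b2q (k != 0%N) <= 0 /\ b2q (k != 0%N) - k%:R <= (0 : rat).
Proof.
case: k => [|k] kn /=; first by rewrite mulr0 b2qE !subrr.
rewrite b2qE !subr_le0 ler1n; split => //.
have n0 : (n%:R : rat) != 0 by rewrite pnatr_eq0 -lt0n; apply: leq_trans kn.
have h : (n%:R : rat)^-1 * k.+1%:R <= (n%:R)^-1 * n%:R.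
  by apply: ler_wpM2l; [rewrite invr_ge0 ler0n | rewrite ler_nat].
by rewrite mulVf in h.
Qed.

Section TSMP.
Variables (V : finType) (adj : rel V).
Local Notation ps := (prop_step adj).

Lemma card_b2q (A P : {set V}) : \sum_(w in A) b2q (w \in P) = #|A :&: P|%:R.
Proof.
rewrite (eq_bigr (fun w => if w \in P then 1 else 0)); last by move=> w _; rewrite b2qE.
rewrite -big_mkcondr /= (@eq_bigl _ _ _ _ _ _ (fun w => w \in A :&: P)); last first.
  by move=> w; rewrite inE.
by rewrite sumr_const.
Qed.

Lemma card_b2qT (P : {set V}) : \sum_v b2q (v \in P) = #|P|%:R.
Proof.
rewrite (eq_bigr (fun w => if w \in P then 1 else 0)); last by move=> w _; rewrite b2qE.
by rewrite -big_mkcond /= sumr_const.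
Qed.

Lemma diffcard (P Q : {set V}) : P \subset Q ->
  \sum_v (b2q (v \in Q) - b2q (v \in P)) = #|Q :\: P|%:R.
Proof.
move=> PQ; rewrite sumrB !card_b2qT cardsD (setIidPr PQ) natrB //.
exact: subset_leq_card.
Qed.

Lemma neq_card (P Q : {set V}) : P \subset Q -> (Q != P) = (#|Q :\: P| != 0%N).
Proof. by move=> PQ; rewrite cards_eq0 setD_eq0 eqEsubset PQ andbT. Qed.


Lemma ar5 (bu bv c : bool) (j k : nat) : (j <= k)%N -> (bu -> ~~ bv -> j = k -> c) ->
  b2q bu - b2q bv + j%:R <= (c : nat)%:R + (1 + k)%:R - 1 :> rat.
Proof.
move=> jk h; have F1 : (j%:R : rat) <= k%:R by rewrite ler_nat.
case: (eqVneq j k) => [ejk|njk].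
  rewrite ejk; move: h; case: bu; case: bv; case: c => //= h;
    rewrite /b2q /= natrD ?mulr1n ?mulr0n; try lra.
  by have := h isT isT ejk.
have F2 : (j%:R : rat) + 1 <= k%:R.
  have : (j.+1%:R : rat) <= k%:R by rewrite ler_nat ltn_neqAle njk.
  by rewrite -addn1 natrD mulr1n.
by move: h; case: bu; case: bv; case: c => _; rewrite /b2q /= natrD ?mulr1n ?mulr0n; lra.
Qed.

Lemma feas_struct T x y z : TSM_feasible adj T x y z ->
  (forall t, (1 <= t <= T)%N -> [set v | x t v] = ps [set v | x t.-1 v]) /\
  (forall v, x T v) /\
  (forall t, (1 <= t <= T)%N -> z t = ([set v | x t v] != [set v | x t.-1 v])).
Proof.
case=> [h1 [h2 [h3 [h4 [h5 [h6 h7]]]]]].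
pose ny t v := (\sum_(u | adj u v) (y t u v : nat))%N.
have h4n : forall t, (1 <= t <= T)%N -> forall v,
    (x t v : nat) = (x t.-1 v + ny t v)%N.
  move=> t ht v; have := h4 t ht v; rewrite sum_b2q /b2q -natrD => /eqP.
  by rewrite eqr_nat => /eqP.
have step : forall t, (1 <= t <= T)%N -> [set v | x t v] = ps [set v | x t.-1 v].
  move=> t ht; apply/eqP; rewrite eqEsubset; apply/andP; split; apply/subsetP => v.
  - move=> hv; have xtv : x t v by rewrite inE in hv.
    case xv: (x t.-1 v).
      by apply: (subsetP (@ps_sub V adj _)); rewrite inE xv.
    have := h4n t ht v; rewrite xtv xv /= add0n => e1.
    case: (pickP [pred u | adj u v && y t u v]) => [u /andP[auv yuv]|none]; last first.
      move: e1; rewrite /ny big1 // => u auv.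
      by have := none u; rewrite /= auv /= => ->.
    apply: (@ps_force _ _ _ u).
    + by have := h2 t ht u v auv; rewrite b2q_le yuv /= inE.
    + by rewrite inE xv.
    + apply/setP => w; rewrite !inE.
      case: (eqVneq w v) => [->|wv]; first by rewrite xv auv.
      case awu: (adj u w); rewrite ?andbF ?andbT //=.
      have := h3 t ht u v auv w; rewrite !inE wv awu b2q_le yuv /= => -> //.
  - rewrite inE /prop_step in_setU => /orP[|].
      by rewrite inE => xv; have := h4n t ht v; rewrite xv; case: (x t v).
    rewrite inE => /andP[xv /existsP[u /andP[uP /eqP hu]]].
    rewrite inE in uP; rewrite inE in xv.
    have auv : adj u v by move/setP/(_ v): hu; rewrite !inE eqxx => /andP[].
    have sub : forall w, w \in nbhd adj u :\ v -> x t.-1 w.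
      move=> w; rewrite !inE => /andP[wv auw]; apply/negPn/negP => xw.
      by move/setP/(_ w): hu; rewrite !inE xw auw (negbTE wv).
    have := h5 t ht u v auv.
    rewrite (eq_bigr (fun w => b2q (w \in [set v | x t.-1 v]))); last by move=> w _; rewrite inE.
    rewrite card_b2q (setIidPl _); last by apply/subsetP => w /sub; rewrite inE.
    rewrite (cardsD1 v (nbhd adj u)) {2}/nbhd inE auv sum_b2q /b2q uP (negbTE xv) natrD /=.
    move=> h; have ny1 : (1 <= ny t v)%N.
      rewrite -(ler_nat rat); move: h; rewrite ?mulr1n ?mulr0n; lra.
    have := h4n t ht v; case: (x t v) => // /esym/eqP; rewrite addn_eq0 => /andP[_ /eqP].
    by move=> e; rewrite e in ny1.
split => //; split.
  move=> v; have e1 := h1 v.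
  rewrite (eq_bigr (fun t => (ny t v)%:R)) in e1; last by move=> t _; rewrite sum_b2q.
  rewrite -natr_sum /b2q -natrD in e1.
  have e2 : (x 0%N v + \sum_(1 <= t < T.+1) ny t v)%N = 1%N.
    by apply/eqP; rewrite -(eqr_nat rat) e1.
  have := @telescope (fun t => x t v : nat) (fun t => ny t v) T (fun t ht => h4n t ht v).
  by rewrite e2; case: (x T v).
move=> t ht.
have sub : [set v | x t.-1 v] \subset [set v | x t v] by rewrite (step t ht) ps_sub.
have := h6 t ht; have := h7 t ht.
rewrite (eq_bigr (fun v => b2q (v \in [set v | x t v]) - b2q (v \in [set v | x t.-1 v])));
  last by move=> v _; rewrite !inE.
rewrite diffcard // => a b; rewrite (neq_card sub).
by apply: zfrom b a; apply: max_card.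
Qed.


Lemma construct T (S : {set V}) : iter T ps S = setT ->
  exists x y z, TSM_feasible adj T x y z /\
    TSM_objective T x z = #|S|%:R - (2 * T%:R)^-1 * (cnt adj T S)%:R.
Proof.
move=> hT.
pose X t := iter t ps S.
pose pk t v := [pick u | (u \in X t.-1) && (nbhd adj u :\: X t.-1 == [set v])].
pose x' t v := v \in X t.
pose y' t u v := [&& v \in X t, v \notin X t.-1 & pk t v == Some u].
pose z' t := X t != X t.-1.
have Xs : forall t, (0 < t)%N -> X t = ps (X t.-1) by case.
have Xsub : forall t, (0 < t)%N -> X t.-1 \subset X t.
  by move=> t t0; rewrite (Xs t t0) ps_sub.
have pkP : forall t v u, pk t v = Some u ->
    (u \in X t.-1) /\ (nbhd adj u :\: X t.-1 = [set v]).
  move=> t v u; rewrite /pk; case: pickP => // u1 /andP[u1P /eqP h1] [<-].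
  by split.
have ny' : forall t v, (0 < t)%N ->
    (\sum_(u | adj u v) (y' t u v : nat))%N = ((v \in X t) && (v \notin X t.-1) : nat).
  move=> t v t0; case c: ((v \in X t) && (v \notin X t.-1)); last first.
    by rewrite big1 // => u _; rewrite /y' andbA c.
  move/andP: c => [vX vP].
  move: (vX); rewrite (Xs t t0) /prop_step in_setU (negbTE vP) /= inE vP /=.
  case/existsP => u0 /andP[u0P /eqP hu0].
  case e: (pk t v) => [u1|]; last first.
    move: e; rewrite /pk; case: pickP => // none _.
    by have := none u0; rewrite /= u0P hu0 eqxx.
  have [u1P h1] := pkP _ _ _ e.
  have a1 : adj u1 v by move/setP/(_ v): h1; rewrite !inE eqxx => /andP[].
  rewrite (bigD1 u1) //= /y' vX vP e eqxx /= big1 // => u /andP[_ uu1].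
  by case: eqP => // -[ee]; rewrite ee eqxx in uu1.
exists x', y', z'; split; last first.
  rewrite /TSM_objective card_b2qT sum_b2q.
  by [].
split.
  move=> v.
  rewrite (eq_big_nat _ _ (F2 := fun t => (((v \in X t) && (v \notin X t.-1)) : nat)%:R)); last first.
    by move=> t /andP[t0 _]; rewrite sum_b2q ny'.
  rewrite -natr_sum /b2q -natrD.
  have tel := @telescope (fun t => (v \in X t) : nat) (fun t => ((v \in X t) && (v \notin X t.-1)) : nat) T.
  rewrite /x' -tel; first by rewrite /X hT inE.
  move=> t /andP[t0 _]; have := subsetP (Xsub t t0) v.
  by case: (v \in X t); case: (v \in X t.-1) => //= /(_ isT).
split.
  move=> t ht u v auv; rewrite b2q_le; apply/implyP => /and3P[_ _ /eqP hp].
  by case: (pkP _ _ _ hp).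
split.
  move=> t ht u v auv w; rewrite b2q_le !inE => /andP[wv auw].
  apply/implyP => /and3P[_ _ /eqP hp]; case: (pkP _ _ _ hp) => _ h.
  apply/negPn/negP => wP.
  by move/setP/(_ w): h; rewrite !inE wP auw (negbTE wv).
split.
  move=> t /andP[t0 _] v; rewrite sum_b2q ny' // /b2q -natrD; congr (_%:R).
  have := subsetP (Xsub t t0) v; rewrite /x'.
  by case: (v \in X t); case: (v \in X t.-1) => //= /(_ isT).
split.
  move=> t /andP[t0 _] u v auv.
  have cv : v \in nbhd adj u by rewrite inE.
  rewrite /x' card_b2q sum_b2q ny' // (cardsD1 v (nbhd adj u)) cv.
  set A := nbhd adj u :\ v; set P := X t.-1.
  have F3 : A \subset P -> u \in P -> v \notin P -> v \in X t.
    move=> AP uP vP; rewrite (Xs t t0); apply: (ps_force uP vP).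
    apply/setP => w; rewrite !inE.
    case: (eqVneq w v) => [->|wv]; first by rewrite auv andbT.
    case auw: (adj u w); rewrite ?andbF ?andbT //=.
    by apply/negbF; apply: (subsetP AP); rewrite !inE wv auw.
  apply: ar5; first by rewrite subset_leq_card // subsetIl.
  move=> uP vP ejk.
  have AP : A \subset P by apply/setIidPl/eqP; rewrite eqEcard subsetIl ejk leqnn.
  by rewrite (F3 AP uP vP) vP.
split.
  move=> t /andP[t0 _]; rewrite (diffcard (Xsub t t0)) /z' (neq_card (Xsub t t0)).
  by case: (zto (max_card (mem (X t :\: X t.-1)))).
move=> t /andP[t0 _]; rewrite (diffcard (Xsub t t0)) /z' (neq_card (Xsub t t0)).
by case: (zto (max_card (mem (X t :\: X t.-1)))).
Qed.

End TSMP.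

Lemma ar_min (c c' p p' T : nat) (a : rat) : 0 <= a -> a * T%:R <= 1 / 2 ->
  (p <= T)%N -> c%:R - a * p%:R <= c'%:R - a * p'%:R -> (c <= c')%N.
Proof.
move=> a0 aT pT h.
have h1 : a * p%:R <= a * T%:R by apply: ler_wpM2l => //; rewrite ler_nat.
have h2 : 0 <= a * p'%:R by apply: mulr_ge0 => //; rewrite ler0n.
have : (c%:R : rat) < (c' + 1)%:R by rewrite natrD mulr1n; lra.
by rewrite ltr_nat addn1 ltnS.
Qed.

Lemma ar_pt (c p p' T : nat) (a : rat) : (p' <= T)%N -> (T = 0%N \/ 0 < a) ->
  c%:R - a * p%:R <= c%:R - a * p'%:R -> (p' <= p)%N.
Proof.
move=> pT [T0|a0] h; first by move: pT; rewrite T0 leqn0 => /eqP ->.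
have : a * p'%:R <= a * p%:R by lra.
by rewrite ler_pM2l // ler_nat.
Qed.

Theorem corollary4p6 (V : finType) (adj : rel V) (x : nat -> V -> bool)
    (y : nat -> V -> V -> bool) (z : nat -> bool) :
  simple_graph adj ->
  TSM_optimal adj (#|V|.-1) x y z ->
  let C := [set v | x 0%N v] in
  min_zero_forcing_set adj C /\
  PT_is adj (\sum_(1 <= t < (#|V|.-1).+1) z t) /\
  pt_is adj C (\sum_(1 <= t < (#|V|.-1).+1) z t).
Proof.
move=> _ [feas opt] C.
set T := #|V|.-1.
have [step [allT zeq]] := feas_struct feas.
have XC : forall t, (t <= T)%N -> [set v | x t v] = iter t (prop_step adj) C.
  elim=> [|t IH] ht //.
  by rewrite (step t.+1) /= ?IH // ?(ltnW ht) // ht.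
have hT : iter T (prop_step adj) C = setT.
  by rewrite -XC //; apply/setP => v; rewrite !inE allT.
have zsum : (\sum_(1 <= t < T.+1) z t)%N = cnt adj T C.
  rewrite /cnt; apply: eq_big_nat => t /andP[t1 tT]; rewrite zeq ?t1 // !XC //.
  by apply: leq_trans (leq_pred t) _.
pose a : rat := (2 * T%:R)^-1.
have objC : TSM_objective T x z = #|C|%:R - a * (cnt adj T C)%:R.
  rewrite /TSM_objective (@sum_b2q _ _ _ z) zsum -card_b2qT; congr (_ - _).
  by apply: eq_bigr => v _; rewrite inE.
have key : forall S, zero_forcing_set adj S ->
    #|C|%:R - a * (cnt adj T C)%:R <= #|S|%:R - a * (cnt adj T S)%:R /\
    pt_is adj S (cnt adj T S) /\ (cnt adj T S <= T)%N.
  move=> S zS; have hS := ptT zS.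
  have [x' [y' [z' [f' o']]]] := construct hS.
  by rewrite -objC -o'; split; [exact: opt f' | exact: pt_cnt hS].
have [ptC cC] := pt_cnt hT.
have zC : zero_forcing_set adj C := iter_zf hT.
have a0 : 0 <= a by rewrite /a invr_ge0 mulr_ge0 ?ler0n.
have aT : a * T%:R <= 1 / 2.
  case: (eqVneq T 0%N) => [->|T0]; first by rewrite mulr0 mul1r invr_ge0 ler0n.
  rewrite /a invfM -mulrA mulVf ?mul1r ?mulr1 //.
  by rewrite pnatr_eq0.
have aT' : T = 0%N \/ 0 < a.
  case: (eqVneq T 0%N) => [->|T0]; [by left | right].
  by rewrite /a invr_gt0 mulr_gt0 // ltr0n lt0n.
have minC : min_zero_forcing_set adj C.
  split => // C' zC'; have [h _] := key C' zC'.
  exact: ar_min a0 aT cC h.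
rewrite zsum; split => //; split => //; split; first by exists C.
move=> C' [zC' mC'] t' ht'.
have [h [pt' _]] := key C' zC'.
rewrite -(pt_uniq pt' ht').
have e : #|C'| = #|C| by apply/eqP; rewrite eqn_leq (mC' _ zC) (minC.2 _ zC').
rewrite e in h.
exact: ar_pt (pt_cnt (ptT zC')).2 aT' h.
Qed.
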